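(* Let $G=(V,E)$ be a connected graph with $|E|=\Omega(|V|^2)$. Then $Z_c(G)=\Theta(|V|)$. That is, for every constant $c>0$ there is a constant $c'>0$ such that every connected graph $G=(V,E)$ with $|E|\geq c|V|^2$ satisfies $Z_c(G)\geq c'|V|$ (and trivially $Z_c(G)\leq |V|$).
   Context: Zero forcing: given a graph $G$ and a set $S$ of initially colored vertices, if a colored vertex $u$ has exactly one uncolored neighbor $v$, then $v$ becomes colored. $S$ is a zero forcing set if repeated application colors all vertices. A connected forcing set is a zero forcing set $S$ such that the induced subgraph $G[S]$ is connected; $Z_c(G)$, the connected forcing number, is the minimum cardinality of a connected forcing set (defined for connected graphs, since disconnected graphs have no connected forcing set). The asymptotic notation refers to families of graphs whose number of vertices tends to infinity. *)

(* Defs.v *)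
From HB Require Import structures.
From mathcomp Require Import all_boot all_order all_algebra.
From mathcomp Require Export reals.
Set Implicit Arguments. Unset Strict Implicit. Unset Printing Implicit Defensive.

(* A finite simple graph on vertex type T is a symmetric irreflexive relation e. *)

Definition connected_graph (T : finType) (e : rel T) : Prop :=
  (0 < #|T|)%N /\ forall x y : T, connect e x y.

(* Number of (undirected) edges times 2 = number of ordered adjacent pairs. *)
Definition num_arcs (T : finType) (e : rel T) : nat :=
  #|[set p : T * T | e p.1 p.2]|.

Definition force_step (T : finType) (e : rel T) (S : {set T}) : {set T} :=
  S :|: [set v | [exists u, [&& u \in S, e u v, v \notin S &
                  [forall w, (e u w && (w \notin S)) ==> (w == v)]]]].

(* Final colored set: after #|T| rounds the process has stabilised. *)
Definition force_closure (T : finType) (e : rel T) (S : {set T}) : {set T} :=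
  iter #|T| (force_step e) S.

Definition zero_forcing_set (T : finType) (e : rel T) (S : {set T}) : bool :=
  force_closure e S == setT.

Definition induced_connected (T : finType) (e : rel T) (S : {set T}) : bool :=
  [forall x in S, forall y in S,
     connect [rel a b | [&& e a b, a \in S & b \in S]] x y].

Definition connected_forcing_set (T : finType) (e : rel T) (S : {set T}) : bool :=
  zero_forcing_set e S && induced_connected e S.

(* Connected forcing number: minimum cardinality of a connected forcing set
   (for connected graphs, setT is one, so the default #|T| is never spurious). *)
Definition Zc (T : finType) (e : rel T) : nat :=
  \big[minn/#|T|]_(S : {set T} | connected_forcing_set e S) #|S|.

(* Main.v *)
Require Import Defs.
From mathcomp Require Import all_boot all_order all_algebra.
From mathcomp Require Import reals.
From mathcomp Require Import ring lra.
Set Implicit Arguments. Unset Strict Implicit. Unset Printing Implicit Defensive.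

Section Comb.
Variables (T : finType) (e : rel T).

Definition Aset (C : {set T}) : {set T} :=
  [set u in C | [exists w, e u w && (w \notin C)]].

Definition fp (C : {set T}) (v u : T) : bool :=
  [&& u \in C, e u v, v \notin C &
      [forall w, (e u w && (w \notin C)) ==> (w == v)]].

Lemma fp_inj (C : {set T}) v1 v2 u : fp C v1 u -> fp C v2 u -> v1 = v2.
Proof.
case/and4P=> _ _ _ /forallP H1; case/and4P=> _ euv2 v2C _.
by have := H1 v2; rewrite euv2 v2C /= => /eqP.
Qed.

Lemma fp_A (C : {set T}) v u : fp C v u -> u \in Aset C.
Proof.
case/and4P=> uC euv vC _; rewrite inE uC /=; apply/existsP; exists v.
by rewrite euv vC.
Qed.

Lemma sub_step (C : {set T}) : C \subset force_step e C.
Proof. exact: subsetUl. Qed.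

Lemma U_fp (C : {set T}) v : v \in force_step e C :\: C -> exists u, fp C v u.
Proof.
move=> /setDP [vC' vC]; move: vC'; rewrite /force_step inE (negbTE vC) /= inE.
by move=> /existsP [u H]; exists u.
Qed.

Lemma fp_notA (C : {set T}) v u : v \in force_step e C -> fp C v u -> u \notin Aset (force_step e C).
Proof.
move=> vC' /and4P [_ _ _ /forallP H]; rewrite inE; apply/negP => /andP [_ /existsP [w /andP [euw wC']]].
have wC : w \notin C by apply: contra wC'; apply: (subsetP (sub_step C)).
by have := H w; rewrite euw wC /= => /eqP wv; rewrite wv vC' in wC'.
Qed.

Definition g (C : {set T}) v := odflt v [pick u | fp C v u].

Lemma g_fp (C : {set T}) v : v \in force_step e C :\: C -> fp C v (g C v).
Proof.
move=> /U_fp [u Hu]; rewrite /g; case: pickP => [x //|/(_ u)]; by rewrite Hu.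
Qed.

Lemma cardU (C : {set T}) : #|force_step e C :\: C| <= #|Aset C|.
Proof.
rewrite -(card_in_imset (f := g C)).
  apply: subset_leq_card; apply/subsetP => x /imsetP [v vU ->]; exact: fp_A (g_fp vU).
move=> v1 v2 H1 H2 E; apply: (fp_inj (g_fp H1)); rewrite E; exact: g_fp H2.
Qed.

Lemma cardA (C : {set T}) : #|Aset (force_step e C)| <= #|Aset C|.
Proof.
pose h x := if x \in C then x else g C x.
have hU x : x \in force_step e C -> x \notin C -> x \in force_step e C :\: C.
  by move=> H1 H2; rewrite inE H1 H2.
rewrite -(card_in_imset (f := h)).
  apply: subset_leq_card; apply/subsetP => x /imsetP [v vA ->].
  move: (vA); rewrite inE => /andP [vC' /existsP [w /andP [evw wC']]].
  rewrite /h; case: ifP => vC.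
    rewrite inE vC /=; apply/existsP; exists w; rewrite evw /=.
    by apply: contra wC'; apply: (subsetP (sub_step C)).
  by apply: fp_A; apply: g_fp; rewrite hU // vC.
move=> x y xA yA; rewrite /h.
have xC' : x \in force_step e C by move: xA; rewrite inE => /andP [].
have yC' : y \in force_step e C by move: yA; rewrite inE => /andP [].
case: ifP => xC; case: ifP => yC //.
- move=> E; have := fp_notA yC' (g_fp (hU _ yC' (negbT yC))).
  by rewrite -E xA.
- move=> E; have := fp_notA xC' (g_fp (hU _ xC' (negbT xC))).
  by rewrite E yA.
- move=> E; apply: (fp_inj (g_fp (hU _ xC' (negbT xC)))); rewrite E.
  exact: g_fp (hU _ yC' (negbT yC)).
Qed.

Variable S : {set T}.
Definition Cr r := iter r (force_step e) S.

Lemma Cr_mono r s : r <= s -> Cr r \subset Cr s.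
Proof.
move/subnK <-; elim: (s - r) => [|k IH]; first by rewrite add0n.
rewrite addSn; apply: subset_trans IH _; exact: sub_step.
Qed.

Lemma cardA_r r : #|Aset (Cr r)| <= #|S|.
Proof.
elim: r => [|r IH].
  by apply: subset_leq_card; apply/subsetP => x; rewrite inE => /andP [].
exact: leq_trans (cardA _) IH.
Qed.

Hypothesis zf : zero_forcing_set e S.

Lemma hex y : exists r, y \in Cr r.
Proof. exists #|T|; move: zf; rewrite /zero_forcing_set /force_closure /Cr => /eqP ->; by rewrite inE. Qed.

Definition t y := ex_minn (hex y).

Lemma t_in y : y \in Cr (t y).
Proof. by rewrite /t; case: ex_minnP. Qed.

Lemma t_min y r : y \in Cr r -> t y <= r.
Proof. by rewrite /t; case: ex_minnP => m _ H /H. Qed.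

Lemma nbr_bound y : #|[set x | e x y && (t x <= t y)]| <= 2 * #|S|.
Proof.
case Ey: (t y) => [|k].
  rewrite mul2n -addnn; apply: leq_trans (leq_addr _ _).
  apply: subset_leq_card; apply/subsetP => x; rewrite inE leqn0 => /andP [_ /eqP tx].
  by have := t_in x; rewrite tx.
have yC : y \notin Cr k.
  by apply/negP => /t_min; rewrite Ey ltnn.
apply: (@leq_trans #|Aset (Cr k) :|: (force_step e (Cr k) :\: Cr k)|).
  apply: subset_leq_card; apply/subsetP => x; rewrite inE => /andP [exy tx].
  have xC : x \in Cr k.+1 by apply: (subsetP (Cr_mono tx)); exact: t_in.
  have xC' : x \in force_step e (Cr k) by move: xC; rewrite /Cr iterS.
  rewrite in_setU; case xk: (x \in Cr k).
    by apply/orP; left; rewrite inE xk /=; apply/existsP; exists y; rewrite exy yC.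
  by apply/orP; right; rewrite in_setD xk xC'.
rewrite cardsU; apply: leq_trans (leq_subr _ _) _; rewrite mul2n -addnn; apply: leq_add.
  exact: cardA_r.
exact: leq_trans (cardU _) (cardA_r _).
Qed.

Hypothesis esym : symmetric e.

Lemma arcs_bound : num_arcs e <= 4 * #|S| * #|T|.
Proof.
rewrite /num_arcs -sum1_card.
have -> : \sum_(p in [set p : T * T | e p.1 p.2]) 1 = \sum_(x : T) \sum_(y : T) (e x y : nat).
  rewrite pair_big /= big_mkcond /=; apply: eq_bigr => p _; rewrite inE; by case: (e _ _).
apply: (@leq_trans (\sum_(x : T) \sum_(y : T) ((e y x && (t y <= t x)) + (e x y && (t x <= t y)) : nat))).
  apply: leq_sum => x _; apply: leq_sum => y _; rewrite (esym y x).
  case: (e x y) => //=; case: (leqP (t y) (t x)) => //= /ltnW ->; by [].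
under eq_bigr do rewrite big_split /=.
rewrite big_split /= [X in X + _](exchange_big) /=.
rewrite addnn -mul2n.
have H : forall y, \sum_(x : T) ((e x y && (t x <= t y)) : nat) <= 2 * #|S|.
  move=> y; apply: leq_trans (nbr_bound y).
  rewrite -sum1_card [X in _ <= X]big_mkcond /=; apply: leq_sum => x _; rewrite inE; by case: (_ && _).
have Hs : \sum_(y : T) \sum_(x : T) ((e x y && (t x <= t y)) : nat) <= #|T| * (2 * #|S|).
  apply: (@leq_trans (\sum_(y : T) 2 * #|S|)); first by apply: leq_sum => y _; exact: H.
  by rewrite sum_nat_const.
have -> : 4 * #|S| * #|T| = 2 * (#|T| * (2 * #|S|)) by rewrite (mulnC #|T|) !mulnA.
rewrite leq_mul2l; apply/orP; right.
by rewrite exchange_big; exact: Hs.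
Qed.

End Comb.

Lemma zf_setT (T : finType) (e : rel T) : zero_forcing_set e setT.
Proof.
rewrite /zero_forcing_set /force_closure; elim: #|T| => [//|k IH] /=.
apply/eqP/setP => x; by rewrite !inE (eqP IH) inE.
Qed.

Import Order.TTheory GRing.Theory Num.Theory.
Local Open Scope ring_scope.

Theorem theorem1 (R : realType) (c : R) (hc : 0 < c) :
  exists c' : R, 0 < c' /\
    forall (T : finType) (e : rel T),
      symmetric e -> irreflexive e -> connected_graph e ->
      c * (#|T|%:R) ^+ 2 <= (num_arcs e)%:R / 2 ->
      c' * #|T|%:R <= (Zc e)%:R /\ (Zc e <= #|T|)%N.
Proof.
exists (c / 2); split; first by rewrite divr_gt0.
move=> T e es _ [n0 _] hc2.
have key : forall S : {set T}, zero_forcing_set e S -> c / 2 * #|T|%:R <= #|S|%:R.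
  move=> S zS; have H := arcs_bound zS es.
  have hb : (num_arcs e)%:R <= (4 * #|S| * #|T|)%:R :> R by rewrite ler_nat.
  have n0' : 0 < #|T|%:R :> R by rewrite ltr0n.
  rewrite -(ler_pM2l n0').
  have h2 : c * #|T|%:R ^+ 2 <= (4 * #|S| * #|T|)%:R / 2.
    by apply: le_trans hc2 _; rewrite ler_pM2r ?invr_gt0.
  rewrite !natrM in h2.
  set n := #|T|%:R in h2 n0' *; set s := #|S|%:R in h2 *.
  have -> : n * (c / 2 * n) = (c * n ^+ 2) / 2 by rewrite expr2; field.
  have -> : n * s = (4 * s * n / 2) / 2 by field.
  by rewrite ler_pM2r ?invr_gt0.
split.
  rewrite /Zc; apply: (big_ind (fun m : nat => c / 2 * #|T|%:R <= m%:R)).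
  - by have := key _ (zf_setT e); rewrite cardsT.
  - move=> x y hx hy; rewrite /minn; by case: ifP.
  - by move=> S /andP [zS _]; exact: key.
rewrite /Zc; apply: (big_ind (fun m : nat => (m <= #|T|)%N)) => //.
- by move=> x y hx hy; rewrite /minn; case: ifP.
- by move=> S _; exact: max_card.
Qed.
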